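(* Let $\tau$ be a primitive substitution prolongable on a letter $a$ and $\mathbf{x}=\tau^\omega(a)$. If $\tau_2$ is ultimately Pisot, then for each $k\ge1$ the $k$-abelian complexity $(\rho^k_{\mathbf{x}}(n))_{n\ge0}$ is bounded.
   Context: $u\sim_k v$ if $|u|_w=|v|_w$ for all words $w$ of length at most $k$; $\rho^k_{\mathbf{x}}(n)$ is the number of $\sim_k$-classes of length-$n$ factors of $\mathbf{x}$. Primitive: the incidence matrix (entry $(i,j)$ equal to $|\tau(a_i)|_{a_j}$) is primitive. Ultimately Pisot: the characteristic polynomial of the incidence matrix is $X^mP_\theta(X)$, $m\ge0$, $P_\theta$ the minimal polynomial of a Pisot number $\theta$ (algebraic integer $>1$ whose other conjugates have modulus $<1$). $\tau_2$: number the length-$2$ factors of $\mathbf{x}$ as $1,\dots,p$ in order of first occurrence via a bijection $\Theta_2$; for $\ell$ with $u=\Theta_2^{-1}(\ell)$ and $m'=|\tau(u[0])|$, $\tau_2(\ell)=\Theta_2(w_0)\cdots\Theta_2(w_{m'-1})$ with $w_j$ the length-$2$ factor of $\tau(u)$ at position $j$. *)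

(* Defs.v *)
From HB Require Import structures.
From mathcomp Require Import all_boot all_order all_algebra all_field.
From mathcomp Require Import boolp.
Set Implicit Arguments. Unset Strict Implicit. Unset Printing Implicit Defensive.
Import Order.TTheory GRing.Theory Num.Theory.

Section Subst.
Variable A : finType.
Implicit Types (tau : A -> seq A) (x : nat -> A).

Definition subst_word tau (w : seq A) : seq A := flatten (map tau w).

Definition incmx (R : nzRingType) tau : 'M[R]_#|A| :=
  \matrix_(i, j) ((count_mem (enum_val j) (tau (enum_val i)))%:R)%R.

Definition mxpow (R : nzRingType) n (M : 'M[R]_n) (k : nat) : 'M[R]_n :=
  iter k (mulmx M) (1%:M)%R.

Definition primitive tau : Prop :=
  exists k, (0 < k)%N /\ forall i j, (0 < mxpow (incmx int tau) k i j)%R.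

Definition prolongable tau (a : A) : Prop :=
  exists u, tau a = a :: u /\ u != [::].

(* x = tau^omega(a): every tau^n(a) is a prefix of x *)
Definition is_fixed_point tau (a : A) x : Prop :=
  forall n i, (i < size (iter n (subst_word tau) [:: a]))%N ->
    x i = nth a (iter n (subst_word tau) [:: a]) i.

Definition factors2 x : {set A * A} :=
  [set u | `[< exists i, (x i, x i.+1) = u >]].

(* tau_2 on a length-2 word u = u0 u1: the m' = |tau(u0)| length-2 factors
   of tau(u) starting at positions 0 .. m'-1 *)
Definition tau2 tau (u : A * A) : seq (A * A) :=
  let t := tau u.1 ++ tau u.2 in
  [seq (nth u.1 t j, nth u.1 t j.+1) | j <- iota 0 (size (tau u.1))].

Definition incmx2 (R : nzRingType) tau x : 'M[R]_#|factors2 x| :=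
  \matrix_(i, j)
    ((count_mem (enum_val j : A * A) (tau2 tau (enum_val i : A * A)))%:R)%R.

Definition occ (w u : seq A) : nat :=
  count (fun i => take (size w) (drop i u) == w) (iota 0 (size u - size w).+1).

Definition kab (k : nat) (u v : seq A) : bool :=
  [forall l : 'I_k.+1, [forall w : l.-tuple A, occ w u == occ w v]].

Definition factors x (n : nat) : {set n.-tuple A} :=
  [set w | `[< exists i, val w = mkseq (fun j => x (i + j)) n >]].

Definition kab_complexity (k : nat) x (n : nat) : nat :=
  #|[set [set v in factors x n | kab k (val u) (val v)] | u in factors x n]|.

End Subst.

Definition pisot (t : algC) : Prop :=
  t \in Aint /\ (1 < t)%R /\
  forall z : algC, root (minCpoly t) z -> z != t -> (`|z| < 1)%R.

Definition ultimately_pisot n (M : 'M[algC]_n) : Prop :=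
  exists (m : nat) (t : algC), pisot t /\ (char_poly M = 'X^m * minCpoly t)%R.

(* Main.v *)
Require Import Defs.
From mathcomp Require Import all_boot all_order all_algebra all_field.
From mathcomp Require Import boolp.
From mathcomp Require Import zify ring lra.
Import Order.TTheory GRing.Theory Num.Theory.
Set Implicit Arguments. Unset Strict Implicit. Unset Printing Implicit Defensive.

Section Spectral.
Local Open Scope ring_scope.

Lemma entryD (R : nzRingType) m n (A B : 'M[R]_(m, n)) i j :
  (A + B) i j = A i j + B i j.
Proof. by rewrite mxE. Qed.
Lemma entryZ (R : nzRingType) m n a (A : 'M[R]_(m, n)) i j :
  (a *: A) i j = a * A i j.
Proof. by rewrite mxE. Qed.

Lemma char_poly_conj (F : fieldType) n (P A : 'M[F]_n) : P \in unitmx ->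
  char_poly (P *m A *m invmx P) = char_poly A.
Proof.
move=> Pu; rewrite /char_poly /char_poly_mx.
have e1 : map_mx (@polyC F) P *m map_mx (@polyC F) (invmx P) = 1%:M.
  by rewrite -map_mxM mulmxV // map_mx1.
have -> : 'X%:M - map_mx polyC (P *m A *m invmx P) =
          map_mx (@polyC F) P *m ('X%:M - map_mx polyC A) *m map_mx (@polyC F) (invmx P).
  rewrite !map_mxM mulmxBr mulmxBl mul_mx_scalar -scalemxAl.
  congr (_ - _).
  transitivity ('X *: (1%:M : 'M[{poly F}]_n)); first by rewrite scalemx1.
  by congr (_ *: _); apply: esym; exact: e1.
have e2 : \det (map_mx (@polyC F) P) * \det (map_mx (@polyC F) (invmx P)) = 1.
  by rewrite -det_mulmx e1 det1.
by rewrite !det_mulmx mulrAC e2 mul1r.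
Qed.

Lemma decay n (M : 'M[algC]_n.+1) (rs : seq algC) :
  (forall z, z \in rs -> `|z| < 1) ->
  forall r : 'rV_n.+1, r *m \prod_(z <- rs) (M - z%:M) = 0 ->
  forall c : 'cV_n.+1, exists B : algC,
    forall J, \sum_(j < J) `|(r *m M ^+ j *m c) 0 0| <= B.
Proof.
elim: rs => [|z rs IH] Hrs r.
  rewrite big_nil mulmx1 => -> c; exists 0 => J.
  by rewrite big1 // => j _; rewrite !mul0mx mxE normr0.
rewrite big_cons mulmxA => Hr c.
have Hr' : forall z', z' \in rs -> `|z'| < 1.
  by move=> z' h; apply: Hrs; rewrite inE h orbT.
have [B' HB'] := IH Hr' _ Hr c.
set cc := fun j => (r *m M ^+ j *m c) 0 0.
set dd := fun j => (r *m (M - z%:M) *m M ^+ j *m c) 0 0.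
have rec j : cc j.+1 = z * cc j + dd j.
  rewrite /cc /dd mulmxBr mul_mx_scalar !mulmxBl -scalemxAl -scalemxAl.
  rewrite exprS; change (M * M ^+ j) with (M *m M ^+ j).
  rewrite !mulmxA !mxE.
  by rewrite addrCA subrr addr0.
have z1 : `|z| < 1 by apply: Hrs; rewrite inE eqxx.
set S := fun J => \sum_(j < J) `|cc j|.
have step J : S J.+1 <= `|cc 0%N| + `|z| * S J + B'.
  rewrite /S big_ord_recl -addrA lerD2l.
  apply: (le_trans (y := \sum_(j < J) (`|z| * `|cc j| + `|dd j|))).
    apply: ler_sum => j _; rewrite /bump /= rec -normrM; exact: ler_normD.
  by rewrite big_split /= -mulr_sumr lerD2l; apply: HB'.
have mono J : S J <= S J.+1.
  by rewrite /S big_ord_recr /= lerDl normr_ge0.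
have z1' : 0 < 1 - `|z| by rewrite subr_gt0.
exists ((`|cc 0%N| + B') / (1 - `|z|)) => J.
have h := le_trans (mono J) (step J).
rewrite ler_pdivlMr // mulrBr mulr1 lerBlDr.
by apply: (le_trans h); rewrite addrAC [_ * `|z|]mulrC.
Qed.

Lemma minC_simple th : ~~ root (minCpoly th %/ ('X - th%:P)) th.
Proof.
set P := minCpoly th.
have dP : P = (P %/ ('X - th%:P)) * ('X - th%:P).
  by rewrite divpK // dvdp_XsubCl root_minCpoly.
apply/negP => Hr.
set Q := P %/ ('X - th%:P) in dP Hr.
have Hd : root P^`() th.
  by rewrite dP derivM derivXsubC mulr1 /root !hornerE (rootP Hr) subrr mulr0 add0r.
have [p [Pp mp] Hdiv] := minCpolyP th.
move: Hd; rewrite /P Pp deriv_map Hdiv => hd.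
have pn0 : p != 0 by apply: monic_neq0.
have sz : (1 < size p)%N.
  by have := size_minCpoly th; rewrite Pp size_map_poly.
have d0 : p^`() != 0.
  apply/eqP => h; have := congr1 (fun q : {poly rat} => q`_(size p).-2) h.
  rewrite coef_deriv coef0.
  have -> : (size p).-2.+1 = (size p).-1 by case: (size p) sz => [|[|k]].
  move/eqP; rewrite mulrn_eq0 -lead_coefE (monicP mp) oner_eq0 orbF.
  by case: (size p) sz => [|[|k]].
have := dvdp_leq d0 hd; have := lt_size_deriv pn0.
by move=> h1 h2; have := leq_ltn_trans h2 h1; rewrite ltnn.
Qed.


Lemma trig_root n (T : 'M[algC]_n) th :
  root (\prod_(i < n) ('X - (T i i)%:P)) th -> exists i, T i i = th.
Proof.
rewrite /root horner_prod => /prodf_eq0 [i _].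
by rewrite !hornerE subr_eq0 => /eqP ->; exists i.
Qed.

Lemma spectral_sq n (M : 'M[algC]_n.+1) th m : pisot th ->
  char_poly M = 'X^m * minCpoly th ->
  exists (u : 'rV[algC]_n.+1) (kap : 'rV[algC]_n.+1 -> algC)
         (K1 : 'M[algC]_n.+1) (rs : seq algC),
  [/\ forall z, z \in rs -> `|z| < 1,
      K1 *m \prod_(z <- rs) (M - z%:M) = 0 &
      forall (v : 'rV_n.+1) j,
        v *m M ^+ j = v *m K1 *m M ^+ j + (th ^+ j * kap v) *: u].
Proof.
move=> Hp Hc.
set P := minCpoly th; set Qm := P %/ ('X - th%:P); set Q := 'X^m * Qm.
have hsimple := minC_simple th.
have dP : P = Qm * ('X - th%:P).
  by rewrite divpK // dvdp_XsubCl root_minCpoly.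
have hchar : char_poly M = Q * ('X - th%:P) by rewrite Hc -/P dP mulrA.
have th0 : th != 0.
  by case: Hp => _ [h1 _]; apply: lt0r_neq0; apply: lt_trans h1.
have nQth : ~~ root Q th.
  by rewrite /root hornerM hornerXn mulf_eq0 expf_eq0 (negbTE th0) andbF.
have Qroots z : root Q z -> `|z| < 1.
  rewrite /root hornerM hornerXn mulf_eq0 expf_eq0.
  case/orP => [/andP[_ /eqP->] | hz]; first by rewrite normr0 ltr01.
  have zth : z != th.
    by apply/eqP => e; move: hz; rewrite e => hz; move: hsimple; rewrite /root -/P -/Qm hz.
  case: Hp => _ [_ h3]; apply: h3 => //.
  by rewrite -/P dP /root hornerM (eqP hz) mul0r.
have Qmonic : Q \is monic.
  have Pm : P \is monic by apply: minCpoly_monic.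
  have Qmm : Qm \is monic.
    by move: Pm; rewrite dP monicMr // monicXsubC.
  by rewrite /Q monicMr // monicXn.
have [rs Hrs] := closed_field_poly_normal Q.
rewrite (monicP Qmonic) scale1r in Hrs.
have rsin z : z \in rs -> `|z| < 1.
  by move=> h; apply: Qroots; rewrite Hrs root_prod_XsubC.
have hQM : horner_mx M Q = \prod_(z <- rs) (M - z%:M).
  rewrite Hrs rmorph_prod; apply: eq_bigr => z _.
  by rewrite rmorphB /= horner_mx_X horner_mx_C.
have : coprimep ('X - th%:P) Q by rewrite coprimep_sym coprimep_XsubC.
move/Bezout_eq1_coprimepP => [[a b] /= Hab].
set K1 := horner_mx M (a * ('X - th%:P)).
set E := horner_mx M (b * Q).
have KE : K1 + E = 1%:M by rewrite -rmorphD Hab rmorph1.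
have CH := Cayley_Hamilton M.
have EM : E *m M = th *: E.
  have : E * horner_mx M ('X - th%:P) = 0.
    by rewrite -rmorphM -mulrA -hchar rmorphM /= CH mulr0.
  rewrite rmorphB /= horner_mx_X horner_mx_C mulrBr => /eqP.
  by rewrite subr_eq0 => /eqP h; rewrite -mul_mx_scalar; exact: h.
have K1Q : K1 *m horner_mx M Q = 0.
  by rewrite mulmxE -rmorphM -mulrA [_ * Q]mulrC -hchar rmorphM /= CH mulr0.
have EMj j : E *m M ^+ j = th ^+ j *: E.
  elim: j => [|j IH]; first by rewrite expr0 mulmx1 expr0 scale1r.
  rewrite exprS; change (M * M ^+ j) with (M *m M ^+ j).
  by rewrite mulmxA EM -scalemxAl IH scalerA -exprS.
have [Pm Punit Ptrig] := Schur M (ltn0Sn n).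
have Pu : Pm \in unitmx by apply: unitarymx_unit.
move: Ptrig => /= /is_trig_mxP Ttrig.
set T := conjmx Pm M in Ttrig.
have eT : T = Pm *m M *m invmx Pm by exact: conjumx.
clearbody T.
have charT : char_poly T = char_poly M by rewrite eT; apply: char_poly_conj.
have Ttrigb : is_trig_mx T by apply/is_trig_mxP.
have cT := char_poly_trig Ttrigb.
have [i0 Hi0] : exists i0, T i0 i0 = th.
  apply: trig_root; rewrite -cT charT hchar.
  by rewrite rootM root_XsubC eqxx orbT.
have hT j : j != i0 -> T j j != th.
  move=> nj; apply/eqP => hj; move: nQth; rewrite /root.
  have : char_poly M = ('X - th%:P) * ('X - th%:P) *
      \prod_(i < n.+1 | (i != i0) && (i != j)) ('X - (T i i)%:P).
    rewrite -charT cT (bigD1 i0) //= (bigD1 j) /=; last by rewrite nj.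
    by rewrite Hi0 hj mulrA.
  rewrite hchar [_ * ('X - _) * _]mulrC mulrA => /mulIf.
  by move=> /(_ (negbT (polyXsubC_eq0 th))) ->; rewrite !hornerE subrr mulr0 eqxx.
have kerT (w : 'rV_n.+1) : w *m (T - th%:M) = 0 -> w 0 i0 = 0 -> w = 0.
  move=> hw hi0.
  suff H : forall d (j : 'I_n.+1), (n - j)%N = d -> w 0 j = 0.
    by apply/rowP => j; rewrite mxE (H _ j erefl).
  elim/ltn_ind => d IH j hj.
  have [->//|nj] := eqVneq j i0.
  have := congr1 (fun X : 'rV_n.+1 => X 0 j) hw.
  rewrite !mxE (bigD1 j) //= big1 => [|i ij]; last first.
    rewrite !mxE (negbTE ij) mulr0n subr0.
    case: (ltngtP i j) => h.
    - by rewrite Ttrig // mulr0.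
    - rewrite (IH (n - i)%N _ i erefl) ?mul0r //.
      by have := ltn_ord i; lia.
    - by case/eqP: ij; apply: val_inj.
  rewrite addr0 !mxE eqxx mulr1n => /eqP; rewrite mulf_eq0 subr_eq0.
  by rewrite (negbTE (hT j nj)) orbF => /eqP.
set phi := fun S : 'rV_n.+1 => (S *m invmx Pm) 0 i0.
have eig (S : 'rV_n.+1) : S *m M = th *: S -> S *m invmx Pm *m (T - th%:M) = 0.
  move=> hS; rewrite eT mulmxBr mul_mx_scalar !mulmxA mulmxKV // hS.
  by rewrite -scalemxAl subrr.
have entry (a' b' : algC) (X Y : 'rV_n.+1) :
    (a' *: X - b' *: Y) 0 i0 = a' * X 0 i0 - b' * Y 0 i0 by rewrite !mxE.
have rel S S' : S *m M = th *: S -> S' *m M = th *: S' ->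
    phi S' *: S = phi S *: S'.
  move=> hS hS'.
  have hw : phi S' *: (S *m invmx Pm) - phi S *: (S' *m invmx Pm) = 0.
    apply: kerT.
      by rewrite mulmxBl -!scalemxAl (eig S hS) (eig S' hS') !scaler0 subrr.
    by rewrite entry /phi mulrC subrr.
  have := congr1 (mulmx^~ Pm) hw; rewrite mulmxBl -!scalemxAl !mulmxKV // mul0mx.
  by move/eqP; rewrite subr_eq0 => /eqP.
have rowEig (v : 'rV_n.+1) : (v *m E) *m M = th *: (v *m E).
  by rewrite -mulmxA EM scalemxAr.
have decomp (v : 'rV_n.+1) j :
    v *m M ^+ j = v *m K1 *m M ^+ j + th ^+ j *: (v *m E).
  by rewrite -{1}[v]mulmx1 -KE mulmxDr mulmxDl -(mulmxA v E) EMj scalemxAr.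
have K1P : K1 *m \prod_(z <- rs) (M - z%:M) = 0 by rewrite -hQM.
case: (pickP (fun b : 'I_n.+1 => phi (row b E) != 0)) => [b0 hb0 | hnone].
  exists ((phi (row b0 E))^-1 *: row b0 E), (fun v => phi (v *m E)), K1, rs.
  split => // v j; rewrite decomp; congr (_ + _).
  have hv : v *m E = phi (v *m E) *: ((phi (row b0 E))^-1 *: row b0 E).
    rewrite scalerA mulrC -scalerA -(rel _ _ (rowEig v)); last by rewrite rowE.
    by rewrite scalerA mulVf // scale1r.
  by rewrite {1}hv; exact: scalerA.
exists 0, (fun _ => 0), K1, rs; split => // v j.
rewrite decomp scaler0 addr0.
suff -> : v *m E = 0 by rewrite scaler0 addr0.
rewrite (mulmx_sum_row v E) big1 // => i _.
have hi := hnone i; move/negbFE: hi => /eqP hi.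
have w0 : row i E *m invmx Pm = 0.
  by apply: kerT => //; apply: eig; rewrite rowE rowEig.
by rewrite -[row i E](mulmxKV Pu) w0 mul0mx scaler0.
Qed.


Lemma spectral n (M : 'M[algC]_n) th m : pisot th ->
  char_poly M = 'X^m * minCpoly th ->
  exists (u : 'rV[algC]_n) (kap : 'rV[algC]_n -> algC),
  forall c : 'cV[algC]_n, exists B : algC,
   forall (L : algC) J (l : nat -> 'rV[algC]_n), (forall j b, `|l j 0 b| <= L) ->
   `|(\sum_(j < J) l j *m M ^+ j *m c) 0 0
      - (\sum_(j < J) th ^+ j * kap (l j)) * (u *m c) 0 0| <= L * B.
Proof.
case: n M => [|n] M Hp Hc.
  exists 0, (fun _ => 0) => c; exists 0 => L J l hl.
  rewrite summxE big1 => [|j _]; last by rewrite mxE big_ord0.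
  by rewrite mxE big_ord0 mulr0 subrr normr0 mulr0.
have [u [kap [K1 [rs [rsin K1P decomp]]]]] := spectral_sq Hp Hc.
exists u, kap => c.
have hB : forall b : 'I_n.+1, exists B : algC,
    forall J, \sum_(j < J) `|(row b K1 *m M ^+ j *m c) 0 0| <= B.
  by move=> b; apply: (decay rsin); rewrite -row_mul K1P row0.
have [Bf HBf] := fin_all_exists hB.
exists (\sum_b Bf b) => L J l hl.
have L0 : 0 <= L := le_trans (normr_ge0 _) (hl 0%N 0).
have eqs : (\sum_(j < J) l j *m M ^+ j *m c) 0 0
    - (\sum_(j < J) th ^+ j * kap (l j)) * (u *m c) 0 0
    = \sum_(j < J) (l j *m K1 *m M ^+ j *m c) 0 0.
  rewrite summxE mulr_suml -sumrB; apply: eq_bigr => j _.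
  rewrite decomp mulmxDl -scalemxAl entryD entryZ.
  by rewrite addrK.
rewrite eqs; apply: le_trans (ler_norm_sum _ _ _) _.
have ej j : (l j *m K1 *m M ^+ j *m c) 0 0
    = \sum_b l j 0 b * (row b K1 *m M ^+ j *m c) 0 0.
  rewrite -!mulmxA (mulmx_sum_row (l j)) summxE; apply: eq_bigr => b _.
  by rewrite entryZ row_mul !mulmxA.
apply: (le_trans (y := \sum_(j < J) (L * \sum_b `|(row b K1 *m M ^+ j *m c) 0 0|))).
  apply: ler_sum => j _; rewrite ej mulr_sumr.
  apply: le_trans (ler_norm_sum _ _ _) _; apply: ler_sum => b _.
  by rewrite normrM ler_wpM2r.
rewrite -mulr_sumr ler_wpM2l // exchange_big /=.
by apply: ler_sum => b _; apply: HBf.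
Qed.

End Spectral.

Lemma count_iota (P : pred nat) L : count P (iota 0 L) = \sum_(r < L) P r.
Proof.
elim: L => [|L IH]; first by rewrite big_ord0.
by rewrite -addn1 iotaD count_cat IH /= add0n addn0 addn1 big_ord_recr.
Qed.

Lemma eq_mkseq_lt (T : Type) (f g : nat -> T) L :
  (forall q, q < L -> f q = g q) -> mkseq f L = mkseq g L.
Proof. by move=> h; apply/eq_in_map => q; rewrite mem_iota add0n; apply: h. Qed.

Lemma mkseq_td (T : Type) (t : seq T) d r L : r + L <= size t ->
  mkseq (fun q => nth d t (r + q)) L = take L (drop r t).
Proof.
move=> h; apply: (@eq_from_nth _ d).
  by rewrite size_mkseq size_takel // size_drop; lia.
move=> i; rewrite size_mkseq => hi; by rewrite nth_mkseq // nth_take // nth_drop.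
Qed.

Lemma exists_s (f : nat -> nat) n N : f 0 <= n -> n < f N ->
  exists s, s < N /\ f s <= n < f s.+1.
Proof.
elim: N => [|N IH] h0 h1; first by move: (leq_ltn_trans h0 h1); rewrite ltnn.
case: (ltnP n (f N)) => h2.
  by have [s [hs hs']] := IH h0 h2; exists s; split => //; apply: ltnW.
by exists N; rewrite h2 h1.
Qed.

Section Comb.
Variables (A : finType) (tau : A -> seq A) (a : A) (x : nat -> A).
Hypothesis nonerasing : forall b, 0 < size (tau b).
Hypothesis prol : prolongable tau a.
Hypothesis fixp : is_fixed_point tau a x.

Definition sig j (b : A) := iter j (subst_word tau) [:: b].

Lemma subst_cons (s : A -> seq A) b w : subst_word s (b :: w) = s b ++ subst_word s w.
Proof. by []. Qed.

Lemma subst_cat (s : A -> seq A) w1 w2 :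
  subst_word s (w1 ++ w2) = subst_word s w1 ++ subst_word s w2.
Proof. by rewrite /subst_word map_cat flatten_cat. Qed.

Lemma subst_comp (f : A -> seq A) w :
  subst_word tau (subst_word f w) = subst_word (fun b => subst_word tau (f b)) w.
Proof. by elim: w => [//|b w IH]; rewrite !subst_cons subst_cat IH. Qed.

Lemma iter_subst j w : iter j (subst_word tau) w = subst_word (sig j) w.
Proof.
elim: j w => [|j IH] w.
  by elim: w => [//|b w IH]; rewrite subst_cons -IH.
by rewrite iterS IH subst_comp.
Qed.

Lemma size_subst_ge w : size w <= size (subst_word tau w).
Proof.
elim: w => [//|b w IH]; rewrite subst_cons size_cat /=.
by have := nonerasing b; lia.
Qed.

Lemma mem_subst_size (g : A -> seq A) w d : d \in w ->
  size (g d) <= size (subst_word g w).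
Proof.
elim: w => [//|b w IH]; rewrite inE subst_cons size_cat.
by case/orP => [/eqP -> | /IH h]; lia.
Qed.

Lemma x0a : x 0 = a.
Proof. by have := @fixp 0 0 isT. Qed.

Lemma iter_grow n : exists t, iter n (subst_word tau) [:: a] = a :: t /\ n < size (a :: t).
Proof.
elim: n => [|n [t [e s]]]; first by exists [::].
case: prol => u [hu un].
exists (u ++ subst_word tau t); split.
  by rewrite iterS e subst_cons hu.
have := size_subst_ge t; have : 0 < size u by case: u un hu.
rewrite /= size_cat /= in s *; lia.
Qed.

Lemma size_sig_a j : j < size (sig j a).
Proof. by have [t [e s]] := iter_grow j; rewrite /sig e. Qed.

Definition pos (s : A -> seq A) (k : nat) := \sum_(t < k) size (s (x t)).

Lemma posS s k : pos s k.+1 = pos s k + size (s (x k)).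
Proof. by rewrite /pos big_ord_recr. Qed.

Lemma pos_subst s k : size (subst_word s (mkseq x k)) = pos s k.
Proof.
elim: k => [|k IH]; first by rewrite /pos big_ord0.
by rewrite mkseqS -cats1 subst_cat size_cat IH posS subst_cons cats0.
Qed.

Lemma pos_ge1 s : (forall c, 0 < size (s c)) -> forall k, k <= pos s k.
Proof.
move=> h; elim => [//|k IH]; rewrite posS; have := h (x k); lia.
Qed.

Lemma fix_sig j s r : r < size (sig j (x s)) ->
  x (pos (sig j) s + r) = nth a (sig j (x s)) r.
Proof.
move=> hr.
have [t [e sz]] := iter_grow s.
set w := iter s (subst_word tau) [:: a] in e.
have xw i : i < size w -> x i = nth a w i by move=> hi; apply: fixp.
have sw : s < size w by rewrite e.
have dw : w = mkseq x s ++ x s :: drop s.+1 w.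
  have -> : mkseq x s = take s w.
    apply: (@eq_from_nth _ a); first by rewrite size_mkseq size_takel // ltnW.
    move=> i; rewrite size_mkseq => hi; rewrite nth_mkseq // nth_take // xw //.
    exact: ltn_trans hi sw.
  by rewrite (xw s sw) -drop_nth // cat_take_drop.
have big : iter (j + s) (subst_word tau) [:: a] = subst_word (sig j) w.
  by rewrite iterD iter_subst.
have hsz : pos (sig j) s + r < size (iter (j + s) (subst_word tau) [:: a]).
  rewrite big dw subst_cat subst_cons !size_cat pos_subst.
  by rewrite ltn_add2l ltn_addr.
rewrite (fixp hsz) big dw subst_cat subst_cons nth_cat pos_subst.
by rewrite ltnNge leq_addr /= addKn nth_cat hr.
Qed.

Lemma sig1 b : sig 1 b = tau b.
Proof. by rewrite /sig /= /subst_word /= cats0. Qed.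

Lemma pos_tau k : pos (sig 1) k = pos tau k.
Proof. by apply: eq_bigr => t _; rewrite sig1. Qed.

Lemma fix_tau s r : r < size (tau (x s)) ->
  x (pos tau s + r) = nth a (tau (x s)) r.
Proof. by rewrite -sig1 -pos_tau; apply: fix_sig. Qed.

Lemma pos_ge k : k + (0 < k) <= pos tau k.
Proof.
elim: k => [//|k IH]; rewrite posS.
case: k IH => [|k] IH.
  rewrite x0a; case: prol => u [hu un]; rewrite hu /=.
  by rewrite /pos big_ord0; case: u un hu.
by have := nonerasing (x k.+1); lia.
Qed.

Lemma growth : primitive tau -> exists k0, forall b j, j < size (sig (k0 + j) b).
Proof.
case=> k [k0 hk]; exists k => b j.
have H : forall k (i j : 'I_#|A|),
    (0 <= mxpow (incmx int tau) k i j)%R /\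
    ((0 < mxpow (incmx int tau) k i j)%R -> enum_val j \in sig k (enum_val i)).
  elim=> [|k' IH] i j'.
    rewrite /mxpow /= mxE; case: (eqVneq i j') => [->|nij].
      by rewrite inE eqxx ler01.
    by rewrite ltxx.
  have e : mxpow (incmx int tau) k'.+1 = (incmx int tau *m mxpow (incmx int tau) k')%R by [].
  rewrite e !mxE; split.
    apply: sumr_ge0 => d _; apply: mulr_ge0; last exact: (IH d j').1.
    by rewrite mxE ler0n.
  move=> hpos.
  have [d hd] : exists d, (0 < incmx int tau i d * mxpow (incmx int tau) k' d j')%R.
    case: (pickP (fun d => (0 < incmx int tau i d * mxpow (incmx int tau) k' d j')%R)).
      by move=> d hd; exists d.
    move=> hn; move: hpos; rewrite big1 ?ltxx // => d _.
    have h0 : (0 <= incmx int tau i d * mxpow (incmx int tau) k' d j')%R.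
      by apply: mulr_ge0; [rewrite mxE ler0n | exact: (IH d j').1].
    by apply/eqP; move: h0 (hn d); rewrite le0r => /orP [//|->].
  have hx : (0 < incmx int tau i d)%R.
    rewrite lt0r mxE ler0n andbT; apply/eqP => h0; move: hd.
    by rewrite mxE h0 mul0r ltxx.
  have hy : (0 < mxpow (incmx int tau) k' d j')%R.
    rewrite lt0r (IH d j').1 andbT; apply/eqP => h0; move: hd.
    by rewrite h0 mulr0 ltxx.
  have Hd : enum_val d \in tau (enum_val i).
    by move: hx; rewrite mxE ltr0n -has_count has_pred1.
  have Hj := (IH d j').2 hy.
  rewrite /sig iterSr iter_subst; apply/flatten_mapP; exists (enum_val d) => //.
  by rewrite /subst_word /= cats0.
have := (H k (enum_rank b) (enum_rank a)).2 (hk _ _).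
rewrite !enum_rankK => ha.
rewrite /sig addnC iterD -/(sig k b) iter_subst.
apply: leq_trans (size_sig_a j) _; exact: mem_subst_size.
Qed.


Definition y t := (x t, x t.+1).
Lemma y_in t : y t \in factors2 x.
Proof. by rewrite inE; apply/asboolP; exists t. Qed.
Local Notation p := #|factors2 x|.
Definition idx t : 'I_p := enum_rank_in (y_in 0) (y t).
Lemma idxK t : enum_val (idx t) = y t.
Proof. exact: (enum_rankK_in (y_in 0) (y_in t)). Qed.

Local Open Scope ring_scope.

Definition Vv k : 'rV[algC]_p := \sum_(t < k) delta_mx 0 (idx t).
Definition colg (g : A * A -> nat) : 'cV[algC]_p := \col_i (g (enum_val i))%:R.
Local Notation M2 := (incmx2 algC tau x).

Lemma Vv_col g k : (Vv k *m colg g) 0 0 = (\sum_(t < k) g (y t))%:R.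
Proof.
rewrite /Vv mulmx_suml summxE natr_sum; apply: eq_bigr => t _.
by rewrite -rowE mxE /colg mxE idxK.
Qed.

Lemma Vv_split k1 k2 :
  Vv (k1 + k2) = Vv k1 + \sum_(r < k2) delta_mx 0 (idx (k1 + r)).
Proof. by rewrite /Vv big_split_ord. Qed.

Lemma delta_sum_bound (f : nat -> 'I_p) k b :
  `|(\sum_(r < k) delta_mx 0 (f r) : 'rV[algC]_p) 0 b| <= k%:R.
Proof.
rewrite summxE; apply: le_trans (ler_norm_sum _ _ _) _.
rewrite -[k in k%:R]card_ord -sumr_const; apply: ler_sum => r _.
by rewrite mxE normr_nat lern1 leq_b1.
Qed.

Lemma Vv_pos k : Vv (pos tau k) = Vv k *m M2.
Proof.
elim: k => [|k IH]; first by rewrite /Vv /pos !big_ord0 mul0mx.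
rewrite posS Vv_split IH /Vv big_ord_recr /= -/(Vv k) mulmxDl; congr (_ + _).
rewrite -rowE; apply/rowP => j; rewrite summxE !mxE idxK /tau2 count_map.
rewrite count_iota natr_sum; apply: eq_bigr => r _; rewrite !mxE eqxx /=.
congr (_%:R); congr (nat_of_bool _).
rewrite -(inj_eq enum_val_inj) idxK eq_sym; congr (_ == _).
rewrite /y /=; have hr := ltn_ord r.
congr (_, _).
  by rewrite fix_tau // nth_cat hr (set_nth_default a).
rewrite nth_cat; case: ltnP => h.
  by rewrite -addnS fix_tau // (set_nth_default a).
have e : r.+1 = size (tau (x k)) by apply/eqP; rewrite eqn_leq h hr.
rewrite -addnS e subnn -posS -[pos tau k.+1]addn0 fix_tau //.
by rewrite (set_nth_default a).
Qed.

Definition Lt := \max_(b : A) size (tau b).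

Lemma Vv_dec (k : nat) : exists l : nat -> 'rV[algC]_p,
  (forall j b, `|l j 0 b| <= (Lt%:R : algC)) /\
  (forall N, (k < N)%N -> Vv k = \sum_(j < N) l j *m M2 ^+ j).
Proof.
elim/ltn_ind: k => k IH.
case: k IH => [|k] IH.
  exists (fun _ => 0); split; first by move=> j b; rewrite mxE normr0 ler0n.
  by move=> N _; rewrite /Vv big_ord0 big1 // => j _; rewrite mul0mx.
have h0 : (pos tau 0 <= k.+1)%N by rewrite /pos big_ord0.
have h1 : (k.+1 < pos tau k.+2)%N by have := pos_ge k.+2; lia.
have [s [_ /andP [hs2 hs3]]] := exists_s h0 h1.
have sk : (s < k.+1)%N.
  case: s hs2 hs3 => [//|s] hs2 _; have := pos_ge s.+1; lia.
have [l' [hb' he']] := IH s sk.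
pose R : 'rV[algC]_p := \sum_(r < k.+1 - pos tau s) delta_mx 0 (idx (pos tau s + r)).
exists (fun j => if j is j'.+1 then l' j' else R); split.
  case => [|j] b //=; apply: (le_trans (delta_sum_bound (fun r => idx (pos tau s + r)) (k.+1 - pos tau s) b)).
  rewrite ler_nat; move: hs3; rewrite posS => hs3.
  have : (size (tau (x s)) <= Lt)%N by apply: (leq_bigmax (x s)).
  lia.
move=> N hN; case: N hN => [//|N] hN; rewrite big_ord_recl /= expr0 mulmx1.
have eV : Vv k.+1 = Vv (pos tau s) + R by rewrite -{1}(subnKC hs2) Vv_split.
rewrite eV Vv_pos (he' N); last by lia.
rewrite addrC mulmx_suml; congr (_ + _); apply: eq_bigr => j _.
by rewrite exprSr mulmxA.
Qed.


Local Close Scope ring_scope.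

Definition Qc (w : seq A) k :=
  \sum_(t < k) (mkseq (fun q => x (t + q)) (size w) == w : nat).

Lemma Qc_split w k1 k2 : Qc w (k1 + k2) =
  Qc w k1 + \sum_(r < k2) (mkseq (fun q => x (k1 + r + q)) (size w) == w : nat).
Proof. by rewrite /Qc big_split_ord. Qed.

Definition Nw (s : A -> seq A) (w : seq A) (bc : A * A) :=
  \sum_(r < size (s bc.1)) (take (size w) (drop r (s bc.1 ++ s bc.2)) == w : nat).

Lemma Q_pos (s : A -> seq A) w : (forall c, size w <= size (s c)) ->
  (forall k r, r < size (s (x k)) -> x (pos s k + r) = nth a (s (x k)) r) ->
  forall k, Qc w (pos s k) = \sum_(t < k) Nw s w (y t).
Proof.
move=> hs hfix; elim => [|k IH]; first by rewrite /pos !big_ord0 /Qc big_ord0.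
rewrite posS Qc_split IH big_ord_recr /=; congr (_ + _).
rewrite /Nw /=; apply: eq_bigr => r _; congr (nat_of_bool (_ == _)).
have hr := ltn_ord r.
rewrite -(mkseq_td a); last by rewrite size_cat; have := hs (x k.+1); lia.
apply: eq_mkseq_lt => q hq; rewrite nth_cat; case: ltnP => h.
  by rewrite -addnA hfix.
have e : pos s k + r + q = pos s k.+1 + (r + q - size (s (x k))).
  by rewrite posS; lia.
by rewrite e hfix //; have := hs (x k.+1); lia.
Qed.

Lemma occ_Q w i n : size w <= n ->
  Qc w (i + (n - size w).+1) = Qc w i + occ w (mkseq (fun j => x (i + j)) n).
Proof.
move=> hn; rewrite Qc_split /occ size_mkseq count_iota; congr (_ + _).
apply: eq_bigr => r _; have hr := ltn_ord r.
rewrite -(mkseq_td a); last by rewrite size_mkseq; lia.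
congr (nat_of_bool (_ == _)); apply: eq_mkseq_lt => q hq.
by rewrite nth_mkseq ?addnA //; lia.
Qed.

Lemma occ_big w n (u : nat -> A) : n < size w -> occ w (mkseq u n) = 0.
Proof.
move=> h; rewrite /occ size_mkseq.
have -> : n - size w = 0 by lia.
rewrite /= drop0 take_oversize ?size_mkseq ?(ltnW h) //.
case: eqP => // e; move: h; rewrite -e size_mkseq ltnn //.
Qed.


Local Open Scope ring_scope.

Lemma approx (hprim : primitive tau) th m : pisot th ->
  char_poly M2 = 'X^m * minCpoly th ->
  forall w, exists f D : algC, forall k, `|(Qc w k)%:R - f * k%:R| <= D.
Proof.
move=> Hp Hc w.
have [k0 Hg] := growth hprim.
pose sg := sig (k0 + size w).
have hsz c : (size w < size (sg c))%N := Hg c (size w).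
have hsz0 c : (0 < size (sg c))%N by apply: leq_ltn_trans (hsz c).
have hfix k r : (r < size (sg (x k)))%N -> x (pos sg k + r) = nth a (sg (x k)) r.
  exact: fix_sig.
have [u [kap Hsp]] := spectral Hp Hc.
pose ce := colg (fun bc => size (sg bc.1)).
pose cw := colg (Nw sg w).
have [Be HBe] := Hsp ce.
have [Bw HBw] := Hsp cw.
pose L : algC := Lt%:R.
have key k : exists T : algC,
    `|(pos sg k)%:R - T * (u *m ce) 0 0| <= L * Be /\
    `|(Qc w (pos sg k))%:R - T * (u *m cw) 0 0| <= L * Bw.
  have [l [hl he]] := Vv_dec k.
  exists (\sum_(j < k.+1) th ^+ j * kap (l j)).
  have ev c : (Vv k *m c) 0 0 = (\sum_(j < k.+1) l j *m M2 ^+ j *m c) 0 0.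
    by rewrite (he k.+1) // mulmx_suml.
  split.
    have -> : (pos sg k)%:R = (Vv k *m ce) 0 0 by rewrite Vv_col.
    by rewrite ev; apply: HBe.
  have -> : (Qc w (pos sg k))%:R = (Vv k *m cw) 0 0.
    by rewrite Vv_col (Q_pos (s := sg)) // => c; apply: ltnW.
  by rewrite ev; apply: HBw.
have ue : (u *m ce) 0 0 != 0.
  apply/eqP => h0.
  have hb k : (pos sg k)%:R <= L * Be.
    by have [T [h _]] := key k; move: h; rewrite h0 mulr0 subr0 normr_nat.
  have B0 : 0 <= L * Be := le_trans (ler0n _ _) (hb 0%N).
  have hK := archi_boundP B0.
  have hp := pos_ge1 hsz0 (Num.Def.archi_bound (L * Be)).
  have hp' : (Num.Def.archi_bound (L * Be))%:R <=
      (pos sg (Num.Def.archi_bound (L * Be)))%:R :> algC by rewrite ler_nat.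
  have := le_trans hp' (hb _).
  by move=> h; have := lt_le_trans hK h; rewrite ltxx.
pose f := (u *m cw) 0 0 / (u *m ce) 0 0.
pose D0 := L * Bw + `|f| * (L * Be).
have hpos k : `|(Qc w (pos sg k))%:R - f * (pos sg k)%:R| <= D0.
  have [T [h1 h2]] := key k.
  have -> : (Qc w (pos sg k))%:R - f * (pos sg k)%:R =
      ((Qc w (pos sg k))%:R - T * (u *m cw) 0 0) -
      f * ((pos sg k)%:R - T * (u *m ce) 0 0).
    by rewrite /f; field.
  apply: le_trans (ler_normB _ _) _; rewrite normrM.
  by apply: lerD => //; apply: ler_wpM2l.
pose Ls := (\max_(b : A) size (sg b))%N.
exists f, (D0 + Ls%:R + `|f| * Ls%:R) => k.
have hpos1 : (k < pos sg k.+1)%N by apply: pos_ge1.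
have h0 : (pos sg 0 <= k)%N by rewrite /pos big_ord0.
have [s [_ /andP [h1 h2]]] := exists_s h0 hpos1.
have dk : (k - pos sg s <= Ls)%N.
  move: h2; rewrite posS => h2.
  have : (size (sg (x s)) <= Ls)%N by apply: (leq_bigmax (x s)).
  lia.
pose e := (\sum_(r < k - pos sg s)
   (mkseq (fun q => x (pos sg s + r + q)) (size w) == w : nat))%N.
have eQ : Qc w k = (Qc w (pos sg s) + e)%N by rewrite -{1}(subnKC h1) Qc_split.
have he : (e <= k - pos sg s)%N.
  apply: (@leq_trans (\sum_(r < k - pos sg s) 1)%N); first by apply: leq_sum => r _; apply: leq_b1.
  by rewrite sum_nat_const card_ord muln1.
have ek : k = (pos sg s + (k - pos sg s))%N by rewrite subnKC.
have -> : (Qc w k)%:R - f * k%:R =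
    ((Qc w (pos sg s))%:R - f * (pos sg s)%:R) + (e%:R - f * (k - pos sg s)%:R).
  by rewrite eQ {1}ek !natrD; ring.
apply: le_trans (ler_normD _ _) _; rewrite -addrA; apply: lerD; first exact: hpos.
apply: le_trans (ler_normB _ _) _; apply: lerD.
  by rewrite normr_nat ler_nat; apply: leq_trans he dk.
by rewrite normrM normr_nat; apply: ler_wpM2l => //; rewrite ler_nat.
Qed.

Lemma occ_bound (hprim : primitive tau) th m : pisot th ->
  char_poly M2 = 'X^m * minCpoly th ->
  forall w, exists K : nat, forall n i i',
    (occ w (mkseq (fun j => x (i + j)) n) <=
     occ w (mkseq (fun j => x (i' + j)) n) + K)%N.
Proof.
move=> Hp Hc w.
have [f [D HD]] := approx hprim Hp Hc w.
have D0 : 0 <= D := le_trans (normr_ge0 _) (HD 0%N).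
have D4 : 0 <= D + D + D + D by rewrite !addr_ge0.
exists (Num.Def.archi_bound (D + D + D + D)) => n i i'.
case: (leqP (size w) n) => hn; last by rewrite !occ_big.
pose n' := (n - size w).+1.
pose E j := (Qc w j)%:R - f * j%:R.
have eo j : (occ w (mkseq (fun q => x (j + q)) n))%:R =
    E (j + n')%N - E j + f * n'%:R.
  by rewrite /E /n' (occ_Q j hn) !natrD; ring.
set o1 := occ w _; set o2 := occ w _.
have hb : o1%:R - o2%:R <= D + D + D + D.
  apply: le_trans (real_ler_norm (rpredB (realn _ _) (realn _ _))) _.
  rewrite /o1 /o2 !eo.
  have -> : E (i + n')%N - E i + f * n'%:R - (E (i' + n')%N - E i' + f * n'%:R) =
      E (i + n')%N - E i - E (i' + n')%N + E i' by ring.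
  apply: le_trans (ler_normD _ _) _; apply: lerD; last exact: HD.
  apply: le_trans (ler_normB _ _) _; apply: lerD; last exact: HD.
  apply: le_trans (ler_normB _ _) _; apply: lerD; exact: HD.
have hK := archi_boundP D4.
have : o1%:R < (o2 + Num.Def.archi_bound (D + D + D + D))%:R :> algC.
  rewrite natrD addrC -ltrBlDr; exact: le_lt_trans hb hK.
by rewrite ltr_nat => /ltnW.
Qed.

End Comb.

Lemma nonerasing_of_prim (A : finType) (tau : A -> seq A) :
  primitive tau -> forall b, (0 < size (tau b))%N.
Proof.
case=> k [k0 hk] b; rewrite lt0n; apply/negP => /eqP /size0nil e.
have := hk (enum_rank b) (enum_rank b).
case: k k0 hk => [//|k] _ _.
have -> : mxpow (incmx int tau) k.+1 = (incmx int tau *m mxpow (incmx int tau) k)%R by [].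
rewrite mxE big1 ?ltxx // => d _.
by rewrite mxE enum_rankK e /= mul0r.
Qed.

Unset Implicit Arguments.

Theorem theorem39 (A : finType) (tau : A -> seq A) (a : A) (x : nat -> A) :
  primitive tau ->
  prolongable tau a ->
  is_fixed_point tau a x ->
  ultimately_pisot (incmx2 algC tau x) ->
  forall k : nat, (1 <= k)%N ->
    exists C : nat, forall n : nat, (kab_complexity k x n <= C)%N.
Proof.
move=> hprim prol fixp [m [th [Hp Hc]]] k _.
have nonerasing := @nonerasing_of_prim A tau hprim.
pose W := {l : 'I_k.+1 & l.-tuple A}.
have hK : forall w : W, exists K, forall n i i',
    (occ (tagged w : seq A) (mkseq (fun j => x (i + j)) n) <=
     occ (tagged w : seq A) (mkseq (fun j => x (i' + j)) n) + K)%N.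
  by move=> w; exact: (occ_bound nonerasing prol fixp hprim Hp Hc).
have [Kf HKf] := fin_all_exists hK.
pose K := (\max_(w : W) Kf w)%N.
have KfK w : (Kf w <= K)%N by apply: leq_bigmax.
exists #|{ffun W -> 'I_(K + K).+1}| => n.
rewrite /kab_complexity.
set F := factors x n.
pose Cl (u : n.-tuple A) := [set v in F | kab k (val u) (val v)].
have memF v : v \in F -> exists i, val v = mkseq (fun j => x (i + j)) n.
  by rewrite inE => /asboolP.
case: (pickP (mem F)) => [u0 hu0 | hnone]; last first.
  have -> : F = set0 by apply/setP => v; rewrite in_set0; exact: (hnone v).
  by rewrite imset0 cards0.
have bnd v : v \in F -> forall w : W,
    (occ (tagged w : seq A) (val v) <= occ (tagged w : seq A) (val u0) + K)%N /\
    (occ (tagged w : seq A) (val u0) <= occ (tagged w : seq A) (val v) + K)%N.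
  move=> hv w; have [i ei] := memF v hv; have [i0 ei0] := memF u0 hu0.
  rewrite ei ei0; have := KfK w; have := HKf w n i i0; have := HKf w n i0 i; lia.
pose h (v : n.-tuple A) : {ffun W -> 'I_(K + K).+1} :=
  [ffun w : W => inord (occ (tagged w : seq A) (val v) + K - occ (tagged w : seq A) (val u0))].
have hinj v v' : v \in F -> v' \in F -> h v = h v' ->
    forall w : W, occ (tagged w : seq A) (val v) = occ (tagged w : seq A) (val v').
  move=> hv hv' hvv w; have := congr1 (fun g : {ffun W -> 'I_(K + K).+1} => val (g w)) hvv; rewrite /h !ffunE /=.
  have [b1 b2] := bnd v hv w; have [b3 b4] := bnd v' hv' w.
  move: b1 b2 b3 b4 => /= b1 b2 b3 b4.
  rewrite !inordK; lia.
have Cl_eq v v' : (forall w : W, occ (tagged w : seq A) (val v) = occ (tagged w : seq A) (val v')) ->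
    Cl v = Cl v'.
  move=> hw; apply/setP => z; rewrite !inE; congr (_ && _); rewrite /kab.
  apply: eq_forallb => l; apply: eq_forallb => t.
  by rewrite (hw (existT _ l t)).
pose g (phi : {ffun W -> 'I_(K + K).+1}) :=
  if [pick v in F | h v == phi] is Some v then Cl v else set0.
have sub : [set Cl u | u in F] \subset g @: [set: {ffun W -> 'I_(K + K).+1}].
  apply/subsetP => S /imsetP [u hu ->]; apply/imsetP; exists (h u) => //.
  rewrite /g; case: pickP => [v /andP [hv /eqP hvu] | hn].
    by apply: Cl_eq => w; rewrite (hinj v u hv hu hvu).
  by have := hn u; rewrite hu eqxx.
apply: leq_trans (subset_leq_card sub) _.
by apply: leq_trans (leq_imset_card _ _) _; rewrite cardsT.
Qed.
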